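(* Let $\mathsf{K}$ be a finite simplicial complex whose vertex set is a finite set $P\subset\mathbb{R}^d$, let $v\in\mathbb{R}^d$, and let $\zeta_1\prec_v\cdots\prec_v\zeta_s$ be the essential $p$-cycles of the filtration $\mathcal{D}_v(\mathsf{K})$ computed by the standard reduction algorithm. Let $\zeta$ be a $p$-cycle with $[\zeta]\neq 0$ in $H_p(\mathsf{K})$ such that $\zeta=\zeta_{i_1}+\cdots+\zeta_{i_m}+\partial c_{p+1}$ for some $(p+1)$-chain $c_{p+1}$ and indices $i_1<\cdots<i_m$ in $\{1,\dots,s\}$. Then $r_v([\zeta])=r_v(\zeta_{i_m})$, where $r_v([\zeta]):=\min_{\xi\in[\zeta]} r_v(\xi)$. In particular, $\zeta_{i_1}+\cdots+\zeta_{i_m}\in\arg\min_{\xi\in[\zeta]} r_v(\xi)$.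
   Context: All homology is with $\mathbb{Z}_2$ coefficients; chains are identified with their supports (sets of simplices). For a simplex $\sigma$ of $\mathsf{K}$ and $v\in\mathbb{R}^d$, $r_v(\sigma)=\max_{x\text{ vertex of }\sigma}\|v-x\|_2$; for a nonzero chain $\zeta$, $r_v(\zeta)=\max_{\sigma\in\zeta}r_v(\sigma)$. The order $\prec_v$ is a fixed total order on the simplices of $\mathsf{K}$ such that $\sigma_1\prec_v\sigma_2$ whenever $\sigma_1$ is a proper face of $\sigma_2$ or $r_v(\sigma_1)<r_v(\sigma_2)$ (remaining ties broken arbitrarily). For a nonzero chain $\zeta$, $\kappa(\zeta)$ is the $\prec_v$-largest simplex in its support, and chains are compared by $\zeta\prec_v\zeta'$ iff $\kappa(\zeta)\prec_v\kappa(\zeta')$; note $r_v(\zeta)=r_v(\kappa(\zeta))$. $\mathcal{D}_v(\mathsf{K})$ is the simplexwise filtration adding the simplices $\sigma_1\prec_v\sigma_2\prec_v\cdots\prec_v\sigma_N$ one at a time. Standard reduction: let $\partial$ be the $N\times N$ $\mathbb{Z}_2$ boundary matrix (column $j$ is the boundary of $\sigma_j$, rows and columns in filtration order), $low(j)$ the row index of the lowest $1$ in column $j$ (undefined if the column is zero). Start with $V=I_N$; for $j=1,\dots,N$, while there is $j_0<j$ with $low(j_0)=low(j)$, add column $j_0$ to column $j$ of $\partial$ and column $j_0$ of $V$ to column $j$ of $V$. Let $R$ be the resulting reduced matrix. An index $i$ is paired if $i=low(j)$ for some nonzero column $R_j$, or if $R_i\neq0$. The essential $p$-cycles are the columns $V_i$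 (viewed as chains) for indices $i$ such that $\sigma_i$ is a $p$-simplex, $R_i=0$, and $i$ is not paired; each such $V_i$ is a cycle with $\kappa(V_i)=\sigma_i$, and their classes form a basis of $H_p(\mathsf{K})$. *)

(* Defs.v *)
From mathcomp Require Import all_boot all_order all_algebra.
Set Implicit Arguments. Unset Strict Implicit. Unset Printing Implicit Defensive.
Import Order.TTheory GRing.Theory Num.Theory.

(* Vertices: a finType V embedded (injectively) into R^d by pos; the vertex
   set P of the paper is the image of pos.  A simplex is a nonempty
   {set V}; a chain over Z_2 is identified with its support, a
   {set {set V}}.  A p-simplex has p+1 vertices. *)

Section Defs.
Variables (R : rcfType) (d : nat) (V : finType).
Local Open Scope ring_scope.

(* Z_2 addition of chains = symmetric difference *)
Definition symd (A B : {set {set V}}) : {set {set V}} := (A :\: B) :|: (B :\: A).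

Definition bd (c : {set {set V}}) : {set {set V}} :=
  [set t : {set V} | (0 < #|t|)%N &&
     odd #|[set s in c | (t \subset s) && (#|s| == #|t|.+1)%N]| ].

Definition is_complex (K : {set {set V}}) : Prop :=
  [/\ (forall s : {set V}, s \in K -> s != set0),
      (forall s t : {set V}, s \in K -> t \subset s -> t != set0 -> t \in K) &
      (forall x : V, [set x] \in K)].

(* the p-simplices of K; p-chains of K are the subsets of this set *)
Definition psimp (K : {set {set V}}) (p : nat) : {set {set V}} :=
  [set s in K | #|s| == p.+1]%N.

Definition dist (x y : 'rV[R]_d) : R :=
  Num.sqrt (\sum_(i < d) (x ord0 i - y ord0 i) ^+ 2).

Definition rsimp (pos : V -> 'rV[R]_d) (v : 'rV[R]_d) (s : {set V}) : R :=
  \big[Num.max/0]_(x in s) dist v (pos x).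

Definition rchain (pos : V -> 'rV[R]_d) (v : 'rV[R]_d) (c : {set {set V}}) : R :=
  \big[Num.max/0]_(s in c) rsimp pos v s.

(* The order prec_v is given as the enumeration ord = [sigma_1; ...; sigma_N]
   of the simplices of K (0-based positions), required to list K without
   repetition and to be compatible with proper faces and with r_v. *)
Definition valid_order (pos : V -> 'rV[R]_d) (v : 'rV[R]_d)
    (K : {set {set V}}) (ord : seq {set V}) : Prop :=
  [/\ uniq ord, (forall s : {set V}, (s \in ord) = (s \in K)) &
      (forall a b : {set V}, a \in ord -> b \in ord ->
         (a \proper b) || (rsimp pos v a < rsimp pos v b) ->
         (index a ord < index b ord)%N)].

Definition hclass (K : {set {set V}}) (p : nat) (z : {set {set V}})
  : {set {set {set V}}} :=
  [set xi | [exists c : {set {set V}},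
               (c \subset psimp K p.+1) && (xi == symd z (bd c))]].

(* r_v([zeta]) = min over xi in [zeta] of r_v(xi) (zeta itself is in the
   class, so it serves as seed of the finite minimum) *)
Definition rclass (pos : V -> 'rV[R]_d) (v : 'rV[R]_d)
    (K : {set {set V}}) (p : nat) (z : {set {set V}}) : R :=
  \big[Num.min/rchain pos v z]_(xi in hclass K p z) rchain pos v xi.

Section Reduction.
Variable ord : seq {set V}.

(* position (0-based row index) of the lowest one of a nonzero column *)
Definition lowi (c : {set {set V}}) : nat := \max_(s in c) index s ord.

(* index j0 < j of an earlier column with the same low, or j if none *)
Definition pivot (Rp : nat -> {set {set V}}) (j : nat) (r : {set {set V}}) : nat :=
  find (fun j0 => [&& Rp j0 != set0, r != set0 & lowi (Rp j0) == lowi r])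
       (iota 0 j).

(* the while loop for column j (fuel = N suffices: the low strictly drops) *)
Fixpoint reduce_col (fuel : nat) (Rp Vp : nat -> {set {set V}}) (j : nat)
    (r w : {set {set V}}) : {set {set V}} * {set {set V}} :=
  match fuel with
  | 0 => (r, w)
  | fuel'.+1 =>
      let k := pivot Rp j r in
      if (k < j)%N then reduce_col fuel' Rp Vp j (symd r (Rp k)) (symd w (Vp k))
      else (r, w)
  end.

Definition sigma (j : nat) : {set V} := nth set0 ord j.

Fixpoint reduce (n : nat) : (nat -> {set {set V}}) * (nat -> {set {set V}}) :=
  match n with
  | 0 => (fun _ => set0, fun _ => set0)
  | n'.+1 =>
      let RV := reduce n' in
      let rw := reduce_col (size ord) RV.1 RV.2 n' (bd [set sigma n'])
                           [set sigma n'] in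
      (fun i => if i == n' then rw.1 else RV.1 i,
       fun i => if i == n' then rw.2 else RV.2 i)
  end.

Definition Rmat : nat -> {set {set V}} := (reduce (size ord)).1.
Definition Vmat : nat -> {set {set V}} := (reduce (size ord)).2.

Definition paired (i : nat) : bool :=
  has (fun j => (Rmat j != set0) && (lowi (Rmat j) == i)) (iota 0 (size ord))
  || (Rmat i != set0).

Definition essential_idx (p : nat) : seq nat :=
  [seq i <- iota 0 (size ord) |
     [&& #|sigma i| == p.+1, Rmat i == set0 & ~~ paired i]].

(* zeta_{k+1} of the paper (0-based k), ordered by prec_v *)
Definition ess_cycle (p k : nat) : {set {set V}} :=
  Vmat (nth 0 (essential_idx p) k).

End Reduction.
End Defs.

(* Main.v *)
Require Import Defs.
From mathcomp Require Import all_boot all_order all_algebra.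
Set Implicit Arguments. Unset Strict Implicit. Unset Printing Implicit Defensive.
Import Order.TTheory GRing.Theory Num.Theory.

Section Gen.
Variable V : finType.
Implicit Types A B : {set {set V}}.

Lemma in_symd A B x : (x \in symd A B) = (x \in A) (+) (x \in B).
Proof. by rewrite /symd !inE; case: (x \in A); case: (x \in B). Qed.

Lemma symdK A B : symd (symd A B) B = A.
Proof. by apply/setP=> x; rewrite !in_symd addbK. Qed.

Lemma symdC A B : symd A B = symd B A.
Proof. by apply/setP=> x; rewrite !in_symd addbC. Qed.

Lemma symdA A B C : symd A (symd B C) = symd (symd A B) C.
Proof. by apply/setP=> x; rewrite !in_symd addbA. Qed.

Lemma symd0 A : symd A set0 = A.
Proof. by apply/setP=> x; rewrite !in_symd inE addbF. Qed.

Lemma odd_card_symd (T : finType) (A B : {set T}) :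
  odd #|(A :\: B) :|: (B :\: A)| = odd #|A| (+) odd #|B|.
Proof.
have dj : (A :\: B) :&: (B :\: A) = set0.
  by apply/setP=> x; rewrite !inE; case: (x \in A); case: (x \in B).
have := cardsUI (A :\: B) (B :\: A); rewrite dj cards0 addn0 => ->.
rewrite -(cardsID B A) -(cardsID A B) setIC !oddD.
by case: (odd #|B :&: A|); case: (odd _); case: (odd _).
Qed.

Lemma bd_symd A B : bd (symd A B) = symd (bd A) (bd B).
Proof.
apply/setP=> t; rewrite in_symd /bd !inE.
case: (0 < #|t|)%N => //=.
set Q := fun s : {set V} => (t \subset s) && (#|s| == #|t|.+1)%N.
have -> : [set s in symd A B | Q s] =
   symd [set s in A | Q s] [set s in B | Q s].
  by apply/setP=> s; rewrite /symd !inE; case: (Q s); case: (s \in A); case: (s \in B).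
by rewrite /symd odd_card_symd.
Qed.

Lemma bd0 : bd (set0 : {set {set V}}) = set0.
Proof.
apply/setP=> t; rewrite /bd !inE.
have -> : [set s in (set0 : {set {set V}}) | (t \subset s) && (#|s| == #|t|.+1)%N] = set0.
  by apply/setP=> s; rewrite !inE.
by rewrite cards0 andbF.
Qed.

Lemma bd_foldr (I : Type) (F : I -> {set {set V}}) (s : seq I) :
  bd (foldr (@symd V) set0 [seq F i | i <- s]) =
  foldr (@symd V) set0 [seq bd (F i) | i <- s].
Proof. by elim: s => [|a s IH] /=; rewrite ?bd0 // bd_symd IH. Qed.

Lemma in_foldr (I : Type) (F : I -> {set {set V}}) (s : seq I) x :
  (x \in foldr (@symd V) set0 [seq F i | i <- s]) = odd (count (fun i => x \in F i) s).
Proof.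
elim: s => [|a s IH] /=; first by rewrite inE.
by rewrite in_symd IH oddD; case: (x \in F a).
Qed.

End Gen.

Section Red.
Variables (V : finType) (K : {set {set V}}) (ord : seq {set V}).
Hypothesis cK : is_complex K.
Hypothesis uo : uniq ord.
Hypothesis memo : forall s, (s \in ord) = (s \in K).
Implicit Types A B r w : {set {set V}}.
Local Notation N := (size ord).

Definition Sle k A := forall x, x \in A -> (x \in ord) && (index x ord <= k)%N.
Definition inO A := forall x, x \in A -> x \in ord.

Lemma bd_inO A : inO A -> inO (bd A).
Proof.
move=> hA t; rewrite /bd inE => /andP[t0 odd_t].
have : (0 < #|[set s in A | (t \subset s) && (#|s| == #|t|.+1)%N]|)%N.
  by move: odd_t; case: (#|_|).
case/card_gt0P=> s; rewrite !inE => /andP[sA /andP[ts _]].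
case: cK => _ hface _; rewrite memo; apply: (hface s) => //.
  by rewrite -memo; apply: hA.
by rewrite -card_gt0.
Qed.

Lemma sle_inO k A : Sle k A -> inO A.
Proof. by move=> h x /h /andP[]. Qed.

Lemma sleW k l A : (k <= l)%N -> Sle k A -> Sle l A.
Proof. by move=> kl h x /h /andP[-> /leq_trans ->]. Qed.

Lemma low_max A x : x \in A -> (index x ord <= lowi ord A)%N.
Proof. by move=> xA; rewrite /lowi; apply: leq_bigmax_cond. Qed.

Lemma low_ex A : A != set0 -> exists2 x, x \in A & index x ord = lowi ord A.
Proof.
move=> /set0Pn hA.
have : (0 < #|[pred s in A]|)%N by case: hA => x xA; apply/card_gt0P; exists x.
case/(eq_bigmax_cond (fun s => index s ord)) => x xA hx.
by exists x => //; rewrite /lowi hx.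
Qed.

Lemma idx_sig j : (j < N)%N -> index (sigma ord j) ord = j.
Proof. by move=> jN; rewrite /sigma index_uniq. Qed.

Lemma sig_in j : (j < N)%N -> sigma ord j \in ord.
Proof. by move=> jN; rewrite /sigma mem_nth. Qed.

Lemma eq_sig x : x \in ord -> x = sigma ord (index x ord).
Proof. by move=> xo; rewrite /sigma nth_index. Qed.

Lemma low_lt A l : A != set0 -> (forall x, x \in A -> index x ord < l)%N -> (lowi ord A < l)%N.
Proof. by move=> /low_ex[x xA <-] /(_ x xA). Qed.

Lemma low_N A : inO A -> A != set0 -> (lowi ord A < N)%N.
Proof. by move=> hA A0; apply: low_lt => // x /hA; rewrite index_mem. Qed.

Lemma sig_low A : inO A -> A != set0 -> sigma ord (lowi ord A) \in A.
Proof. by move=> hA /low_ex[x xA <-]; rewrite -eq_sig // hA. Qed.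

Definition mu A := if A == set0 then 0%N else (lowi ord A).+1.

Lemma mu_step r B : inO r -> inO B -> r != set0 -> B != set0 ->
  lowi ord B = lowi ord r -> (mu (symd r B) < mu r)%N.
Proof.
move=> hr hB r0 B0 eql; rewrite /mu (negPf r0).
case: ifP => // /negbT S0; rewrite ltnS; apply: low_lt => // x.
rewrite in_symd => hx.
have xo : x \in ord.
  case xr: (x \in r); first exact: hr.
  by apply: hB; move: hx; rewrite xr.
have : (index x ord <= lowi ord r)%N.
  case xr: (x \in r); first exact: low_max.
  by rewrite -eql; apply: low_max; move: hx; rewrite xr.
rewrite leq_eqVlt => /orP[/eqP ex|//].
move: hx; rewrite (eq_sig xo) ex sig_low // -eql sig_low //.
Qed.


Definition ColInv (Rp Vp : nat -> {set {set V}}) k :=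
  [/\ Rp k = bd (Vp k), Sle k (Vp k) & sigma ord k \in Vp k].

Lemma col_inO Rp Vp k : ColInv Rp Vp k -> inO (Rp k).
Proof. by case=> -> /sle_inO h _; apply: bd_inO. Qed.

Lemma red_col fuel Rp Vp j r w : (j < N)%N ->
  (forall k, (k < j)%N -> ColInv Rp Vp k) -> r = bd w -> Sle j w ->
  sigma ord j \in w -> (mu r <= fuel)%N ->
  let rw := reduce_col ord fuel Rp Vp j r w in
  [/\ rw.1 = bd rw.2, Sle j rw.2, sigma ord j \in rw.2 &
     forall k, (k < j)%N -> Rp k != set0 -> rw.1 != set0 ->
        lowi ord (Rp k) != lowi ord rw.1].
Proof.
move=> jN hC; elim: fuel r w => [|f IH] r w er sw sjw hmu /=.
  split=> // k _ _; move: hmu; rewrite /mu; case: ifP => [/eqP -> _ |//].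
  by rewrite ?eqxx.
have hr : inO r by rewrite er; apply: bd_inO; apply: sle_inO sw.
case: ifP => [kj | /negbT kj].
  set k := pivot ord Rp j r in kj *.
  have hk : [&& Rp k != set0, r != set0 & lowi ord (Rp k) == lowi ord r].
    have := @nth_find _ 0 (fun j0 => [&& Rp j0 != set0, r != set0 & lowi ord (Rp j0) == lowi ord r]) (iota 0 j).
    rewrite has_find size_iota -/(pivot ord Rp j r) -/k nth_iota // add0n.
    by apply.
  case/and3P: hk => Rk0 r0 /eqP el.
  case: (hC k kj) => eR sV sk.
  apply: IH.
  - by rewrite bd_symd er eR.
  - move=> x; rewrite in_symd; case xw: (x \in w) => /= hx; first exact: sw.
    by apply: (sleW (ltnW kj) sV); move: hx; case: (x \in Vp k).
  - rewrite in_symd sjw /=; apply/negP => /sV /andP[_].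
    by rewrite idx_sig // leqNgt kj.
  - rewrite -ltnS; apply: leq_trans hmu; apply: mu_step => //.
    by apply: col_inO; apply: hC.
split=> // k kj0 Rk0 r0; move: kj.
rewrite /pivot -leqNgt => hj.
have : ~~ has (fun j0 => [&& Rp j0 != set0, r != set0 & lowi ord (Rp j0) == lowi ord r]) (iota 0 j).
  by rewrite has_find size_iota -leqNgt.
move/hasPn/(_ k); rewrite mem_iota add0n kj0 Rk0 r0 /= => /(_ isT) //.
Qed.


Definition Inv n (RV : (nat -> {set {set V}}) * (nat -> {set {set V}})) :=
  (forall k, (k < n)%N -> ColInv RV.1 RV.2 k) /\
  (forall k k', (k < n)%N -> (k' < n)%N -> k != k' -> RV.1 k != set0 ->
     RV.1 k' != set0 -> lowi ord (RV.1 k) != lowi ord (RV.1 k')).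

Lemma red_inv n : (n <= N)%N -> Inv n (reduce ord n).
Proof.
elim: n => [|n IH] hn; first by split.
have [hC hL] := IH (ltnW hn).
rewrite /=.
set RV := reduce ord n.
have s1 : Sle n [set sigma ord n].
  by rewrite /Sle => x; rewrite inE; move=> /eqP ->; rewrite sig_in // idx_sig // leqnn.
have hm : (mu (bd [set sigma ord n]) <= N)%N.
  rewrite /mu; case: ifP => // /negbT h; apply: low_N => //.
  by apply: bd_inO; apply: sle_inO s1.
have [e1 e2 e3 e4] := red_col hn hC erefl s1 (set11 _) hm.
set rw := reduce_col _ _ _ _ _ _ _ in e1 e2 e3 e4 *.
split=> /=.
  move=> k; rewrite ltnS leq_eqVlt => /orP[/eqP -> | kn].
    rewrite /ColInv; cbv beta; rewrite eqxx; split; [exact: e1|exact: e2|exact: e3].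
  rewrite /ColInv; cbv beta; rewrite (ltn_eqF kn); exact: (hC k kn).
move=> k k' hk hk'; move: hk; rewrite ltnS leq_eqVlt => /orP[/eqP Ek | kn]; move: hk'; rewrite ltnS leq_eqVlt => /orP[/eqP Ek' | kn']; rewrite ?Ek ?Ek'.
- rewrite eqxx => h; exfalso; move: h => /negP h; apply: h; exact: isT.
- rewrite eqxx (ltn_eqF kn') => _ h1 h2; rewrite eq_sym; exact: (e4 k' kn' h2 h1).
- rewrite eqxx (ltn_eqF kn) => _ h1 h2; exact: (e4 k kn h1 h2).
- rewrite (ltn_eqF kn) (ltn_eqF kn'); exact: hL.
Qed.


Lemma argmax_seq (s : seq nat) (f : nat -> nat) : s != [::] ->
  exists2 a, a \in s & forall b, b \in s -> (f b <= f a)%N.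
Proof.
elim: s => [//|a s IH] _.
case: s IH => [|c s] IH.
  by exists a => [|b]; rewrite ?inE ?eqxx // => /eqP ->.
have [b bs hb] := IH isT.
case: (leqP (f b) (f a)) => h.
  exists a; first by rewrite inE eqxx.
  move=> x; rewrite inE => /orP[/eqP -> // | /hb]; move/leq_trans; apply; exact: h.
exists b; first by rewrite inE bs orbT.
move=> x; rewrite inE => /orP[/eqP -> | /hb //]; exact: ltnW.
Qed.

Hypothesis hinv : Inv N (reduce ord N).
Local Notation Rm := (Rmat ord).
Local Notation Vm := (Vmat ord).

Lemma colV k : (k < N)%N -> ColInv Rm Vm k.
Proof. by move=> kN; case: hinv => h _; exact: (h k kN). Qed.

Lemma lowsV k k' : (k < N)%N -> (k' < N)%N -> k != k' -> Rm k != set0 ->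
     Rm k' != set0 -> lowi ord (Rm k) != lowi ord (Rm k').
Proof. case: hinv => _ h; exact: h. Qed.

Lemma span_red k A : (k <= N)%N ->
  (forall x, x \in A -> (x \in ord) && (index x ord < k)%N) ->
  exists J : seq nat, [/\ uniq J, all (fun j => j < k)%N J &
                         A = foldr (@symd V) set0 [seq Vm j | j <- J]].
Proof.
elim: k A => [|k IH] A kN hA.
  exists [::]; split => //; apply/setP => x; rewrite inE.
  by apply/negP => /hA; rewrite ltn0 andbF.
case sA: (sigma ord k \in A).
  have [sV sk] : Sle k (Vm k) /\ sigma ord k \in Vm k by case: (colV kN).
  have : exists J, [/\ uniq J, all (fun j => j < k)%N J &
           symd A (Vm k) = foldr (@symd V) set0 [seq Vm j | j <- J]].
    apply: IH; first exact: ltnW.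
    move=> x; rewrite in_symd => hx.
    have /andP[xo xi] : (x \in ord) && (index x ord <= k)%N.
      case xA: (x \in A); first by have /andP[-> ] := hA x xA; rewrite ltnS => ->.
      by apply: sV; move: hx; rewrite xA.
    rewrite xo /= ltn_neqAle xi andbT; apply/negP => /eqP ek.
    by move: hx; rewrite (eq_sig xo) ek sA sk.
  case=> J [uJ aJ eJ]; exists (k :: J); split.
  - rewrite /= uJ andbT; apply/negP => kJ.
    by move/allP: aJ => /(_ k kJ); rewrite ltnn.
  - rewrite /= ltnSn /=; apply/allP => j /(allP aJ); exact: ltnW.
  - by rewrite /= -eJ symdC symdK.
have : exists J, [/\ uniq J, all (fun j => j < k)%N J &
         A = foldr (@symd V) set0 [seq Vm j | j <- J]].
  apply: IH; first exact: ltnW.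
  move=> x xA; have /andP[xo] := hA x xA; rewrite xo ltnS leq_eqVlt => /orP[/eqP ek|//].
  by move: xA; rewrite (eq_sig xo) ek sA.
case=> J [uJ aJ eJ]; exists J; split => //.
apply/allP => j /(allP aJ); exact: ltnW.
Qed.

Lemma key J e : uniq J -> all (fun j => j < N)%N J ->
  (forall j, (j < N)%N -> Rm j != set0 -> lowi ord (Rm j) != e) -> (e < N)%N ->
  sigma ord e \in foldr (@symd V) set0 [seq Rm j | j <- J] ->
  exists2 y, y \in foldr (@symd V) set0 [seq Rm j | j <- J] &
     (y \in ord) && (e < index y ord)%N.
Proof.
move=> uJ aJ hpair eN.
set J' := [seq j <- J | Rm j != set0].
have cnt : forall x, count (fun j => x \in Rm j) J = count (fun j => x \in Rm j) J'.
  move=> x; rewrite count_filter; apply: eq_count => j /=.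
  case: (Rm j =P set0) => [-> | _]; first by rewrite inE.
  by rewrite andbT.
have uJ' : uniq J' by apply: filter_uniq.
have aJ' : forall j, j \in J' -> (j < N)%N /\ Rm j != set0.
  move=> j; rewrite mem_filter => /andP[-> jJ]; split => //.
  exact: (allP aJ).
rewrite in_foldr cnt => hs.
have J'0 : J' != [::] by move: hs; case: (J').
have [a aJ'' ha] := argmax_seq (fun j => lowi ord (Rm j)) J'0.
have [aN Ra0] := aJ' a aJ''.
have hRa : inO (Rm a) by apply: col_inO; apply: colV.
set m := lowi ord (Rm a).
have mN : (m < N)%N by apply: low_N.
exists (sigma ord m).
  rewrite in_foldr cnt.
  have -> : count (fun j => sigma ord m \in Rm j) J' = count (pred1 a) J'.
    apply: eq_in_count => j jJ /=.
    case: (eqVneq j a) => [-> | ja]; first by rewrite sig_low.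
    have [jN Rj0] := aJ' j jJ.
    apply/negP => hy.
    have := low_max hy; rewrite idx_sig // => h1.
    have := ha j jJ; rewrite -/m => h2.
    have e1 : lowi ord (Rm j) = m by apply/eqP; rewrite eqn_leq h2 h1.
    by move: (lowsV jN aN ja Rj0 Ra0); rewrite e1 -/m eqxx.
  by rewrite count_uniq_mem // aJ''.
rewrite sig_in // idx_sig //.
have : has (fun j => sigma ord e \in Rm j) J' by rewrite has_count; move: hs; case: count.
case/hasP => j jJ hj.
have [jN _] := aJ' j jJ.
have := low_max hj; rewrite idx_sig // => h1.
have h2 := ha j jJ.
rewrite ltn_neqAle (leq_trans h1 h2) andbT eq_sym.
exact: hpair.
Qed.

End Red.
Section H.
Local Open Scope ring_scope.

Lemma big_max_ge0 (R : realDomainType) (I : finType) (P : pred I) (F : I -> R) :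
  0 <= \big[Num.max/0]_(i | P i) F i.
Proof. by elim/big_rec: _ => // i x _ hx; rewrite le_max hx orbT. Qed.

Lemma big_max_le (R : realDomainType) (I : finType) (P : pred I) (F : I -> R) M :
  0 <= M -> (forall i, P i -> F i <= M) -> \big[Num.max/0]_(i | P i) F i <= M.
Proof. by move=> h0 h; elim/big_ind: _ => // x y hx hy; rewrite ge_max hx. Qed.

Lemma big_max_ge (R : realDomainType) (I : finType) (P : pred I) (F : I -> R) i :
  P i -> F i <= \big[Num.max/0]_(i | P i) F i.
Proof. by move=> Pi; rewrite (bigD1 i) //= le_max lexx. Qed.

End H.

Lemma path_last (s : seq nat) a : path ltn a s -> forall x, x \in a :: s -> (x <= last a s)%N.
Proof.
elim: s a => [|b s IH] a /=.
  by move=> _ x; rewrite inE => /eqP ->.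
case/andP=> ab pb x; rewrite inE => /orP[/eqP -> |xs].
  by apply: leq_trans (ltnW ab) _; apply: IH => //; rewrite inE eqxx.
exact: IH.
Qed.

Lemma mem_last0 (s : seq nat) : s != [::] -> last 0%N s \in s.
Proof. by case: s => [//|a s] _ /=; apply: mem_last. Qed.

Lemma le_last0 (s : seq nat) : sorted ltn s -> forall x, x \in s -> (x <= last 0%N s)%N.
Proof. by case: s => [//|a s] /= hp x hx; apply: path_last. Qed.

Unset Implicit Arguments. Set Strict Implicit.

Theorem mainTheorem1 (R : rcfType) (d : nat) (V : finType)
    (pos : V -> 'rV[R]_d) (K : {set {set V}}) (v : 'rV[R]_d)
    (ord : seq {set V}) (p : nat) (zeta c : {set {set V}}) (idx : seq nat) :
  injective pos ->
  is_complex K ->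
  valid_order pos v K ord ->
  zeta \subset psimp K p ->
  bd zeta = set0 ->
  ~ (exists b : {set {set V}}, b \subset psimp K p.+1 /\ bd b = zeta) ->
  sorted ltn idx -> idx != [::] ->
  all (fun i => i < size (essential_idx ord p)) idx ->
  c \subset psimp K p.+1 ->
  zeta = symd (foldr (@symd V) set0 [seq ess_cycle ord p i | i <- idx]) (bd c) ->
  rclass pos v K p zeta = rchain pos v (ess_cycle ord p (last 0 idx)) /\
  rchain pos v (foldr (@symd V) set0 [seq ess_cycle ord p i | i <- idx])
    = rclass pos v K p zeta.
Proof.
move=> _ cK [uo memo hord] _ _ _ hs hn0 hall hc Hz.
have hinv := red_inv cK uo memo (leqnn (size ord)).
set N := size ord.
set E := essential_idx ord p.
set m := last 0%N idx.
set e := nth 0%N E m.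
have mono : forall a b, a \in ord -> b \in ord -> (index a ord <= index b ord)%N ->
    (rsimp pos v a <= rsimp pos v b)%R.
  move=> a b ao bo hab; rewrite leNgt; apply/negP => hlt.
  have := hord b a bo ao; rewrite hlt orbT => /(_ isT).
  by rewrite ltnNge hab.
have midx : m \in idx by apply: mem_last0.
have le_m : forall i, i \in idx -> (i <= m)%N by apply: le_last0.
have uidx : uniq idx by apply: sorted_uniq hs; [exact: ltn_trans | exact: ltnn].
have sE : sorted ltn E by apply: sorted_filter; [exact: ltn_trans | exact: iota_ltn_sorted].
have sizeE : forall i, i \in idx -> (i < size E)%N by move=> i /(allP hall).
have eE : forall i, (i < size E)%N -> nth 0%N E i \in E by move=> i hi; apply: mem_nth.
have Eprop : forall j, j \in E -> (j < N)%N /\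
    (forall k, (k < N)%N -> Rmat ord k != set0 -> lowi ord (Rmat ord k) != j).
  move=> j; rewrite /E /essential_idx mem_filter mem_iota add0n => /andP[/and3P[_ _ np] jN].
  split => // k kN Rk0; move: np; rewrite /paired negb_or => /andP[/hasPn h _].
  by have := h k; rewrite mem_iota add0n kN Rk0 /= eq_sym => /(_ isT).
have [eN hpair] := Eprop e (eE m (sizeE m midx)).
have mono_e : forall i, i \in idx -> i != m -> (nth 0%N E i < e)%N.
  move=> i hi him; apply: (sorted_ltn_nth ltn_trans 0%N sE); rewrite ?inE ?sizeE //.
  by rewrite ltn_neqAle him le_m.
have le_e : forall i, i \in idx -> (nth 0%N E i <= e)%N.
  move=> i hi; case: (eqVneq i m) => [-> // | him]; exact: ltnW (mono_e i hi him).
set Z := foldr (@symd V) set0 [seq ess_cycle ord p i | i <- idx].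
have SZ : Sle ord e Z.
  move=> x; rewrite in_foldr => hx.
  have : has (fun i => x \in ess_cycle ord p i) idx by rewrite has_count; move: hx; case: count.
  case/hasP => i hi hxi.
  have [_ sV _] := colV hinv (proj1 (Eprop _ (eE i (sizeE i hi)))).
  exact: (sleW (le_e i hi) sV hxi).
have sZ : sigma ord e \in Z.
  rewrite in_foldr.
  have -> : count (fun i => sigma ord e \in ess_cycle ord p i) idx = count (pred1 m) idx.
    apply: eq_in_count => i hi /=.
    case: (eqVneq i m) => [-> | him]; first by case: (colV hinv eN).
    have iN := proj1 (Eprop _ (eE i (sizeE i hi))).
    have [_ sV _] := colV hinv iN.
    apply/negP => /sV /andP[_]; rewrite idx_sig // leqNgt.
    by rewrite (mono_e i hi him).
  by rewrite count_uniq_mem // midx.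
set M := rsimp pos v (sigma ord e).
have rmax : forall A, Sle ord e A -> sigma ord e \in A -> rchain pos v A = M.
  move=> A sA sa; apply/eqP; rewrite eq_le; apply/andP; split.
    apply: big_max_le; first exact: big_max_ge0.
    move=> x /sA /andP[xo xi]; apply: mono => //; first exact: sig_in.
    by rewrite idx_sig.
  exact: (big_max_ge (fun s => rsimp pos v s) sa).
have rZ : rchain pos v Z = M by apply: rmax.
have rm : rchain pos v (ess_cycle ord p m) = M.
  have [_ sV sk] := colV hinv eN; exact: rmax.
have lb : forall c' : {set {set V}}, c' \subset psimp K p.+1 -> (M <= rchain pos v (symd zeta (bd c')))%R.
  move=> c' hc'.
  have inK : forall C : {set {set V}}, C \subset psimp K p.+1 -> forall x, x \in C -> x \in ord.
    by move=> C hC x xC; rewrite memo; move/subsetP: hC => /(_ x xC); rewrite inE => /andP[].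
  have [J [uJ aJ eJ]] : exists J : seq nat, [/\ uniq J, all (fun j => j < N)%N J &
         symd c c' = foldr (@symd V) set0 [seq Vmat ord j | j <- J]].
    apply: (span_red hinv (leqnn N)) => x; rewrite in_symd => hx.
    have xo : x \in ord by case xc: (x \in c); [exact: (inK c hc x xc) | apply: (inK c' hc' x); move: hx; rewrite xc].
    by rewrite xo index_mem.
  set X := foldr (@symd V) set0 [seq Rmat ord j | j <- J].
  have eX : symd zeta (bd c') = symd Z X.
    rewrite Hz -symdA -bd_symd eJ bd_foldr /X; congr (symd Z _).
    congr foldr; apply/eq_in_map => j /(allP aJ) jN; by case: (colV hinv jN) => ->.
  rewrite eX.
  have [y [yin yo yi]] : exists y, [/\ y \in symd Z X, y \in ord & (e <= index y ord)%N].
    case sX: (sigma ord e \in X).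
      have [y yX /andP[yo ey]] := key cK uo memo hinv uJ aJ hpair eN sX.
      exists y; split => //; last exact: ltnW.
      rewrite in_symd yX addbT; apply/negP => /SZ /andP[_]; rewrite leqNgt ey //.
    exists (sigma ord e); split; first by rewrite in_symd sZ sX.
      exact: sig_in.
    by rewrite idx_sig.
  apply: le_trans (big_max_ge (fun s => rsimp pos v s) yin).
  by apply: mono => //; [exact: sig_in | rewrite idx_sig].
have ZinC : Z \in hclass K p zeta.
  rewrite inE; apply/existsP; exists c; rewrite hc /=; apply/eqP.
  by rewrite Hz symdK.
have rc : rclass pos v K p zeta = M.
  apply/eqP; rewrite eq_le; apply/andP; split.
    rewrite /rclass (bigD1 Z) //= ge_min rZ lexx //.
  rewrite /rclass; elim/big_ind: _ => //.
  - have := lb set0 (sub0set _); rewrite bd0 symd0 //.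
  - by move=> x y hx hy; rewrite le_min hx hy.
  move=> xi; rewrite inE => /existsP[c' /andP[hc' /eqP ->]]; exact: lb.
by rewrite rc rm rZ.
Qed.
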